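(* Let $A$ be a real $m\times m$ matrix, $f$ in the range of $A$, $y$ the minimal-norm solution of $Ay=f$ (so $y\perp\mathcal{N}(A)$). Fix $q\in(0,1)$, $C>1$, $\varepsilon\in(0,1)$. For each $\delta\in(0,1)$ let $f_\delta\in\mathbb{R}^m$ satisfy $\|f_\delta-f\|\le\delta$ and $\|f_\delta\|>C\delta^\varepsilon$. Define $u_1^\delta=0$, $u_{n+1}^\delta=q^nT_{q^n}^{-1}u_n^\delta+T_{q^n}^{-1}A^*f_\delta$ for $n\ge1$, and let $n_\delta$ be the smallest integer $n\ge1$ with $\|AT_{q^{n}}^{-1}A^*f_\delta-f_\delta\|\le C\delta^\varepsilon$. Then $$\lim_{\delta\to0}\|u_{n_\delta}^\delta-y\|=0.$$
   Context: $A^*$ is the transpose of $A$, $T:=A^*A$, $T_a:=T+aI$ for $a>0$; $\mathcal{N}(A)=\{u:Au=0\}$; $\|\cdot\|$ is the Euclidean norm. *)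

(* Defs.v *)
(* real m x m matrices are functions nat -> nat -> R,
   vectors in R^m are functions nat -> R; only indices < m matter. *)
From Stdlib Require Import Reals Lra Lia ClassicalEpsilon.
Open Scope R_scope.

Definition vec := nat -> R.
Definition mat := nat -> nat -> R.

Fixpoint rsum (m : nat) (g : nat -> R) : R :=
  match m with O => 0 | S k => rsum k g + g k end.

Definition vzero : vec := fun _ => 0.
Definition vadd (u v : vec) : vec := fun i => u i + v i.
Definition vsub (u v : vec) : vec := fun i => u i - v i.
Definition vscale (c : R) (u : vec) : vec := fun i => c * u i.

Definition mv (m : nat) (A : mat) (u : vec) : vec :=
  fun i => rsum m (fun j => A i j * u j).
Definition tmv (m : nat) (A : mat) (u : vec) : vec :=
  fun i => rsum m (fun j => A j i * u j).

Definition inner (m : nat) (u v : vec) : R := rsum m (fun i => u i * v i).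
Definition norm (m : nat) (u : vec) : R := sqrt (inner m u u).

Definition veq (m : nat) (u v : vec) : Prop := forall i, (i < m)%nat -> u i = v i.

(* T_a u = (A^* A + a I) u *)
Definition Tmul (m : nat) (A : mat) (a : R) (u : vec) : vec :=
  vadd (tmv m A (mv m A u)) (vscale a u).

(* T_a^{-1} w : the solution v of T_a v = w (T_a is invertible for a > 0) *)
Definition Tinv (m : nat) (A : mat) (a : R) (w : vec) : vec :=
  epsilon (inhabits vzero) (fun v => veq m (Tmul m A a v) w).

Definition min_norm_solution (m : nat) (A : mat) (f y : vec) : Prop :=
  veq m (mv m A y) f /\
  forall z, veq m (mv m A z) f -> norm m y <= norm m z.

(* uu k = u_{k+1}^delta :  u_1 = 0,
   u_{n+1} = q^n T_{q^n}^{-1} u_n + T_{q^n}^{-1} A^* fd   (n >= 1) *)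
Fixpoint uu (m : nat) (A : mat) (q : R) (fd : vec) (k : nat) : vec :=
  match k with
  | O => vzero
  | S k' =>
      let n := S k' in
      vadd (vscale (q ^ n) (Tinv m A (q ^ n) (uu m A q fd k')))
           (Tinv m A (q ^ n) (tmv m A fd))
  end.

Definition useq (m : nat) (A : mat) (q : R) (fd : vec) (n : nat) : vec :=
  uu m A q fd (n - 1).

Definition stop_cond (m : nat) (A : mat) (q C eps delta : R) (fd : vec) (n : nat) : Prop :=
  norm m (vsub (mv m A (Tinv m A (q ^ n) (tmv m A fd))) fd) <= C * Rpower delta eps.

Definition n_delta (m : nat) (A : mat) (q C eps delta : R) (fd : vec) : nat :=
  epsilon (inhabits 1%nat)
    (fun n => (1 <= n)%nat /\ stop_cond m A q C eps delta fd n /\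
              forall k, (1 <= k)%nat -> (k < n)%nat -> ~ stop_cond m A q C eps delta fd k).

(* Main.v *)
Require Import Defs.
From Stdlib Require Import Reals Lra Lia Psatz ClassicalEpsilon FunctionalExtensionality Classical.
Open Scope R_scope.

Lemma rsum_ext n g h : (forall i, (i < n)%nat -> g i = h i) -> rsum n g = rsum n h.
Proof. induction n; simpl; intros H; auto. rewrite IHn by (intros; apply H; lia). rewrite H by lia. auto. Qed.

Lemma rsum_plus n g h : rsum n (fun i => g i + h i) = rsum n g + rsum n h.
Proof. induction n; simpl; [lra|]. rewrite IHn. lra. Qed.

Lemma rsum_scal n c g : rsum n (fun i => c * g i) = c * rsum n g.
Proof. induction n; simpl; [lra|]. rewrite IHn. lra. Qed.

Lemma rsum_scal_r n c g : rsum n (fun i => g i * c) = rsum n g * c.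
Proof. induction n; simpl; [lra|]. rewrite IHn. lra. Qed.

Lemma rsum_minus n g h : rsum n (fun i => g i - h i) = rsum n g - rsum n h.
Proof. induction n; simpl; [lra|]. rewrite IHn. lra. Qed.

Lemma rsum_zero n : rsum n (fun _ => 0) = 0.
Proof. induction n; simpl; [lra|]. rewrite IHn. lra. Qed.

Lemma rsum_swap n p g : rsum n (fun i => rsum p (fun j => g i j)) = rsum p (fun j => rsum n (fun i => g i j)).
Proof.
  induction n; simpl. - symmetry; apply rsum_zero.
  - rewrite IHn. rewrite <- rsum_plus. reflexivity.
Qed.

Lemma rsum_nonneg n g : (forall i, (i < n)%nat -> 0 <= g i) -> 0 <= rsum n g.
Proof. induction n; simpl; intros H; [lra|]. pose proof (H n ltac:(lia)). pose proof (IHn ltac:(intros; apply H; lia)). lra. Qed.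

Lemma rsum_term n g i : (forall j, (j < n)%nat -> 0 <= g j) -> (i < n)%nat -> g i <= rsum n g.
Proof.
  induction n; simpl; intros H Hi; [lia|].
  assert (0 <= rsum n g) by (apply rsum_nonneg; intros; apply H; lia).
  destruct (Nat.eq_dec i n). - subst. lra.
  - pose proof (IHn ltac:(intros; apply H; lia) ltac:(lia)). pose proof (H n ltac:(lia)). lra.
Qed.

Lemma rsum_abs n g : Rabs (rsum n g) <= rsum n (fun i => Rabs (g i)).
Proof. induction n; simpl. - rewrite Rabs_R0; lra. - eapply Rle_trans; [apply Rabs_triang|]. lra. Qed.

Lemma rsum_le n g h : (forall i, (i < n)%nat -> g i <= h i) -> rsum n g <= rsum n h.
Proof. induction n; simpl; intros H; [lra|]. pose proof (H n ltac:(lia)). pose proof (IHn ltac:(intros; apply H; lia)). lra. Qed.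

Lemma rsum_delta n i a v : (i < n)%nat ->
  rsum n (fun j => (if Nat.eqb i j then a else 0) * v j) = a * v i.
Proof.
  induction n; simpl; intros H; [lia|].
  destruct (Nat.eq_dec i n).
  - subst. rewrite Nat.eqb_refl.
    rewrite (rsum_ext n _ (fun _ => 0)). rewrite rsum_zero. lra.
    intros j Hj. destruct (Nat.eqb_spec n j); [lia|]. lra.
  - rewrite IHn by lia. destruct (Nat.eqb_spec i n); [lia|]. lra.
Qed.

Section VS.
Variable m : nat.

Lemma inner_sym u v : inner m u v = inner m v u.
Proof. unfold inner. apply rsum_ext; intros; lra. Qed.

Lemma inner_veq u u' v v' : veq m u u' -> veq m v v' -> inner m u v = inner m u' v'.
Proof. intros H1 H2. unfold inner. apply rsum_ext; intros. rewrite H1, H2 by auto. auto. Qed.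

Lemma inner_add_l u v w : inner m (vadd u v) w = inner m u w + inner m v w.
Proof. unfold inner, vadd. rewrite <- rsum_plus. apply rsum_ext; intros; lra. Qed.
Lemma inner_sub_l u v w : inner m (vsub u v) w = inner m u w - inner m v w.
Proof. unfold inner, vsub. rewrite <- rsum_minus. apply rsum_ext; intros; lra. Qed.
Lemma inner_scale_l c u w : inner m (vscale c u) w = c * inner m u w.
Proof. unfold inner, vscale. rewrite <- rsum_scal. apply rsum_ext; intros; lra. Qed.
Lemma inner_add_r u v w : inner m w (vadd u v) = inner m w u + inner m w v.
Proof. rewrite !(inner_sym w). apply inner_add_l. Qed.
Lemma inner_sub_r u v w : inner m w (vsub u v) = inner m w u - inner m w v.
Proof. rewrite !(inner_sym w). apply inner_sub_l. Qed.
Lemma inner_scale_r c u w : inner m w (vscale c u) = c * inner m w u.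
Proof. rewrite !(inner_sym w). apply inner_scale_l. Qed.

Lemma inner_pos u : 0 <= inner m u u.
Proof. unfold inner. apply rsum_nonneg. intros. nra. Qed.

Lemma inner_zero u : inner m u u = 0 -> veq m u vzero.
Proof.
  intros H i Hi. unfold vzero.
  pose proof (rsum_term m (fun i => u i * u i) i ltac:(intros; nra) Hi).
  unfold inner in H. nra.
Qed.

Lemma norm_nonneg u : 0 <= norm m u.
Proof. apply sqrt_pos. Qed.

Lemma norm_sq u : norm m u * norm m u = inner m u u.
Proof. apply sqrt_sqrt, inner_pos. Qed.

Lemma norm_veq u v : veq m u v -> norm m u = norm m v.
Proof. intros H. unfold norm. rewrite (inner_veq u v u v H H). auto. Qed.

Lemma norm_zero_veq u : norm m u = 0 -> veq m u vzero.
Proof. intros H. apply inner_zero. rewrite <- norm_sq, H. lra. Qed.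

Lemma norm_vzero : norm m vzero = 0.
Proof. unfold norm, inner, vzero. rewrite (rsum_ext m _ (fun _ => 0)) by (intros; lra). rewrite rsum_zero. apply sqrt_0. Qed.

Lemma norm_veq0 u : veq m u vzero -> norm m u = 0.
Proof. intros H. rewrite (norm_veq _ _ H). apply norm_vzero. Qed.

Lemma sq_le_norm a b : 0 <= b -> a * a <= b * b -> a <= b.
Proof. intros. nra. Qed.

Lemma cauchy_schwarz u v : Rabs (inner m u v) <= norm m u * norm m v.
Proof.
  pose proof (norm_sq u) as Hu. pose proof (norm_sq v) as Hv.
  pose proof (norm_nonneg u). pose proof (norm_nonneg v).
  set (a := inner m u u) in *. set (b := inner m v v) in *. set (c := inner m u v).
  assert (Hq : forall t, 0 <= a + 2 * t * c + t * t * b).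
  { intros t. pose proof (inner_pos (vadd u (vscale t v))) as P.
    rewrite inner_add_l, !inner_add_r, !inner_scale_l, !inner_scale_r in P.
    rewrite (inner_sym v u) in P. unfold a, b, c. nra. }
  assert (Hc : c * c <= a * b).
  { destruct (Req_dec b 0) as [Hb|Hb].
    - destruct (Req_dec c 0) as [Hc0|Hc0]. + rewrite Hc0, Hb; lra.
      + pose proof (Hq (- (a + 1) / (2 * c))) as P. rewrite Hb in P.
        replace (2 * (- (a + 1) / (2 * c)) * c) with (-(a+1)) in P by (field; auto). nra.
    - assert (0 <= b) by apply inner_pos. assert (0 < b) by lra.
      pose proof (Hq (- c / b)) as P.
      replace (a + 2 * (- c / b) * c + - c / b * (- c / b) * b) with (a - c * c / b) in P by (field; lra).
      assert (c * c / b <= a) by lra.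
      assert (c * c = (c * c / b) * b) by (field; lra). nra. }
  assert (0 <= norm m u * norm m v) by (apply Rmult_le_pos; auto).
  apply sq_le_norm; [auto|]. replace (Rabs c * Rabs c) with (c * c) by (unfold Rabs; destruct Rcase_abs; lra).
  replace (norm m u * norm m v * (norm m u * norm m v)) with (a * b) by (rewrite <- Hu, <- Hv; ring). auto.
Qed.

Lemma inner_le u v : inner m u v <= norm m u * norm m v.
Proof. eapply Rle_trans; [apply Rle_abs| apply cauchy_schwarz]. Qed.

Lemma norm_triangle u v : norm m (vadd u v) <= norm m u + norm m v.
Proof.
  pose proof (norm_nonneg u). pose proof (norm_nonneg v). pose proof (norm_nonneg (vadd u v)).
  apply sq_le_norm; [lra|]. rewrite norm_sq.
  rewrite inner_add_l, !inner_add_r. rewrite (inner_sym v u).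
  pose proof (inner_le u v). pose proof (norm_sq u). pose proof (norm_sq v). nra.
Qed.

Lemma norm_scale c u : norm m (vscale c u) = Rabs c * norm m u.
Proof.
  pose proof (norm_nonneg u). pose proof (norm_nonneg (vscale c u)). pose proof (Rabs_pos c).
  apply Rsqr_inj; auto. apply Rmult_le_pos; auto. unfold Rsqr.
  rewrite norm_sq, inner_scale_l, inner_scale_r.
  replace (Rabs c * norm m u * (Rabs c * norm m u)) with ((Rabs c * Rabs c) * (norm m u * norm m u)) by ring.
  rewrite norm_sq. replace (Rabs c * Rabs c) with (c * c) by (unfold Rabs; destruct Rcase_abs; lra). ring.
Qed.

Lemma norm_sub u v : norm m (vsub u v) <= norm m u + norm m v.
Proof.
  replace (vsub u v) with (vadd u (vscale (-1) v)).
  - eapply Rle_trans; [apply norm_triangle|]. rewrite norm_scale. replace (Rabs (-1)) with 1 by (unfold Rabs; destruct Rcase_abs; lra). lra.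
  - apply functional_extensionality; intro i; unfold vadd, vsub, vscale; ring.
Qed.

Lemma norm_sub_rev u v : norm m u - norm m v <= norm m (vsub u v).
Proof.
  pose proof (norm_triangle (vsub u v) v).
  replace (vadd (vsub u v) v) with u in H by (apply functional_extensionality; intro i; unfold vadd, vsub; ring).
  lra.
Qed.

Lemma comp_le_norm u i : (i < m)%nat -> Rabs (u i) <= norm m u.
Proof.
  intros Hi. pose proof (norm_nonneg u). apply sq_le_norm; auto.
  rewrite norm_sq. replace (Rabs (u i) * Rabs (u i)) with (u i * u i) by (unfold Rabs; destruct Rcase_abs; lra).
  apply (rsum_term m (fun i => u i * u i)); auto. intros; nra.
Qed.

Lemma norm_le_l1 u : norm m u <= rsum m (fun i => Rabs (u i)).
Proof.
  assert (H0 : 0 <= rsum m (fun i => Rabs (u i))) by (apply rsum_nonneg; intros; apply Rabs_pos).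
  apply sq_le_norm; auto. rewrite norm_sq. unfold inner.
  clear H0. induction m as [|k IH]; simpl. lra.
  assert (0 <= rsum k (fun i => Rabs (u i))) by (apply rsum_nonneg; intros; apply Rabs_pos).
  pose proof (Rabs_pos (u k)).
  replace (u k * u k) with (Rabs (u k) * Rabs (u k)) by (unfold Rabs; destruct Rcase_abs; lra).
  nra.
Qed.


Lemma vext (u v : vec) : (forall i, u i = v i) -> u = v.
Proof. apply functional_extensionality. Qed.

Lemma mv_veq G u v : veq m u v -> mv m G u = mv m G v.
Proof. intros H. apply vext; intro i. unfold mv. apply rsum_ext. intros. rewrite H; auto. Qed.
Lemma mv_add G u v : mv m G (vadd u v) = vadd (mv m G u) (mv m G v).
Proof. apply vext; intro i. unfold mv, vadd. rewrite <- rsum_plus. apply rsum_ext; intros; ring. Qed.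
Lemma mv_sub G u v : mv m G (vsub u v) = vsub (mv m G u) (mv m G v).
Proof. apply vext; intro i. unfold mv, vsub. rewrite <- rsum_minus. apply rsum_ext; intros; ring. Qed.
Lemma mv_scale G c u : mv m G (vscale c u) = vscale c (mv m G u).
Proof. apply vext; intro i. unfold mv, vscale. rewrite <- rsum_scal. apply rsum_ext; intros; ring. Qed.
Lemma mv_zero G : mv m G vzero = vzero.
Proof. apply vext; intro i. unfold mv, vzero. rewrite (rsum_ext m _ (fun _ => 0)) by (intros; ring). apply rsum_zero. Qed.

Definition trm (G : mat) : mat := fun i j => G j i.
Lemma tmv_mv G u : tmv m G u = mv m (trm G) u.
Proof. reflexivity. Qed.

Lemma adjoint G u v : inner m (tmv m G u) v = inner m u (mv m G v).
Proof.
  unfold inner, tmv, mv.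
  rewrite (rsum_ext m (fun i => rsum m (fun j => G j i * u j) * v i)
                      (fun i => rsum m (fun j => G j i * u j * v i)))
    by (intros; rewrite <- rsum_scal_r; auto).
  rewrite (rsum_ext m (fun i => u i * rsum m (fun j => G i j * v j))
                      (fun i => rsum m (fun j => G i j * u i * v j)))
    by (intros; rewrite <- rsum_scal; apply rsum_ext; intros; ring).
  rewrite rsum_swap. auto.
Qed.

Lemma op_bound G : exists L, 0 <= L /\ forall v, norm m (mv m G v) <= L * norm m v.
Proof.
  exists (rsum m (fun i => rsum m (fun j => Rabs (G i j)))). split.
  - apply rsum_nonneg; intros; apply rsum_nonneg; intros; apply Rabs_pos.
  - intros v. eapply Rle_trans; [apply norm_le_l1|].
    rewrite <- rsum_scal_r. apply rsum_le. intros i Hi.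
    unfold mv. eapply Rle_trans; [apply rsum_abs|].
    rewrite <- rsum_scal_r. apply rsum_le. intros j Hj.
    rewrite Rabs_mult. apply Rmult_le_compat_l; [apply Rabs_pos|]. apply comp_le_norm; auto.
Qed.
End VS.

Definition PinvHyp (m : nat) := forall G : mat, exists P : mat, forall y : vec,
  (forall v, veq m (mv m G v) vzero -> inner m y v = R0) -> veq m (tmv m G (tmv m P y)) y.

Section SA.
Variable m : nat.
Variable A : mat.

Definition Sop v := tmv m A (mv m A v).
Definition Smat : mat := fun i j => rsum m (fun l => A l i * A l j).
Definition Tmat (a : R) : mat := fun i j => Smat i j + (if Nat.eqb i j then a else 0).

Lemma Sop_mat v : Sop v = mv m Smat v.
Proof.
  apply vext; intro i. unfold Sop, tmv, mv, Smat.
  rewrite (rsum_ext m (fun j => A j i * rsum m (fun j0 => A j j0 * v j0))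
                      (fun l => rsum m (fun j => A l i * A l j * v j)))
    by (intros; rewrite <- rsum_scal; apply rsum_ext; intros; ring).
  rewrite (rsum_ext m (fun j => rsum m (fun l => A l i * A l j) * v j)
                      (fun j => rsum m (fun l => A l i * A l j * v j)))
    by (intros; rewrite <- rsum_scal_r; auto).
  apply rsum_swap.
Qed.

Lemma Smat_sym : trm Smat = Smat.
Proof. apply functional_extensionality; intro i; apply functional_extensionality; intro j.
  unfold trm, Smat. apply rsum_ext; intros; ring. Qed.

Lemma Tmat_sym a : trm (Tmat a) = Tmat a.
Proof. apply functional_extensionality; intro i; apply functional_extensionality; intro j.
  unfold trm, Tmat, Smat. rewrite Nat.eqb_sym. f_equal. apply rsum_ext; intros; ring. Qed.

Lemma Tmul_mat a v : veq m (Tmul m A a v) (mv m (Tmat a) v).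
Proof.
  intros i Hi. unfold Tmul, vadd, vscale. fold (Sop v). rewrite Sop_mat.
  unfold mv at 2, Tmat.
  rewrite (rsum_ext m _ (fun j => Smat i j * v j + (if Nat.eqb i j then a else 0) * v j)) by (intros; ring).
  rewrite rsum_plus, rsum_delta by auto. auto.
Qed.

Lemma Sop_veq u v : veq m u v -> Sop u = Sop v.
Proof. intros H. unfold Sop. rewrite (mv_veq m A u v H). auto. Qed.
Lemma Sop_add u v : Sop (vadd u v) = vadd (Sop u) (Sop v).
Proof. unfold Sop. rewrite mv_add, !tmv_mv, mv_add. auto. Qed.
Lemma Sop_sub u v : Sop (vsub u v) = vsub (Sop u) (Sop v).
Proof. unfold Sop. rewrite mv_sub, !tmv_mv, mv_sub. auto. Qed.
Lemma Sop_scale c u : Sop (vscale c u) = vscale c (Sop u).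
Proof. unfold Sop. rewrite mv_scale, !tmv_mv, mv_scale. auto. Qed.

Lemma Tmul_eq a v : Tmul m A a v = vadd (Sop v) (vscale a v).
Proof. reflexivity. Qed.

Lemma Tmul_veq a u v : veq m u v -> veq m (Tmul m A a u) (Tmul m A a v).
Proof. intros H i Hi. rewrite !Tmul_eq, (Sop_veq u v H). unfold vadd, vscale. rewrite H; auto. Qed.

Lemma Tmul_add a u v : Tmul m A a (vadd u v) = vadd (Tmul m A a u) (Tmul m A a v).
Proof. rewrite !Tmul_eq, Sop_add. apply vext; intro i; unfold vadd, vscale; ring. Qed.
Lemma Tmul_sub a u v : Tmul m A a (vsub u v) = vsub (Tmul m A a u) (Tmul m A a v).
Proof. rewrite !Tmul_eq, Sop_sub. apply vext; intro i; unfold vadd, vsub, vscale; ring. Qed.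
Lemma Tmul_scale a c u : Tmul m A a (vscale c u) = vscale c (Tmul m A a u).
Proof. rewrite !Tmul_eq, Sop_scale. apply vext; intro i; unfold vadd, vscale; ring. Qed.
Lemma Sop_Tmul a v : Sop (Tmul m A a v) = Tmul m A a (Sop v).
Proof. rewrite !Tmul_eq, Sop_add, Sop_scale. auto. Qed.

Lemma inner_Sop v : inner m (Sop v) v = inner m (mv m A v) (mv m A v).
Proof. unfold Sop. apply adjoint. Qed.

Lemma Sop_pos v : 0 <= inner m (Sop v) v.
Proof. rewrite inner_Sop. apply inner_pos. Qed.

Lemma Sop_ker v : veq m (Sop v) vzero -> veq m (mv m A v) vzero.
Proof. intros H. apply inner_zero. rewrite <- inner_Sop.
  rewrite (inner_veq m _ vzero v v H (fun _ _ => eq_refl)). unfold inner, vzero.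
  rewrite (rsum_ext m _ (fun _ => 0)) by (intros; ring). apply rsum_zero. Qed.

Lemma inner_vzero_l v : inner m vzero v = 0.
Proof. unfold inner, vzero. rewrite (rsum_ext m _ (fun _ => 0)) by (intros; ring). apply rsum_zero. Qed.

Lemma Tmul_inj a v : 0 < a -> veq m (Tmul m A a v) vzero -> veq m v vzero.
Proof.
  intros Ha H. apply inner_zero.
  assert (E : inner m (Tmul m A a v) v = 0).
  { rewrite (inner_veq m _ vzero v v H (fun _ _ => eq_refl)). apply inner_vzero_l. }
  rewrite Tmul_eq, inner_add_l, inner_scale_l in E.
  pose proof (Sop_pos v). pose proof (inner_pos m v). nra.
Qed.

Lemma Tinv_spec (Hp : PinvHyp m) a w : 0 < a -> veq m (Tmul m A a (Tinv m A a w)) w.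
Proof.
  intros Ha. unfold Tinv. apply epsilon_spec.
  destruct (Hp (Tmat a)) as [P HP].
  exists (tmv m P w).
  assert (Hw : veq m (tmv m (Tmat a) (tmv m P w)) w).
  { apply HP. intros v Hv. assert (veq m v vzero).
    { apply (Tmul_inj a v Ha). intros i Hi. rewrite Tmul_mat by auto. apply Hv; auto. }
    rewrite (inner_veq m w w v vzero (fun _ _ => eq_refl) H). rewrite inner_sym. apply inner_vzero_l. }
  intros i Hi. rewrite Tmul_mat by auto. rewrite <- Hw by auto. rewrite (tmv_mv m (Tmat a)), Tmat_sym. auto.
Qed.

Lemma Tinv_uniq (Hp : PinvHyp m) a d : 0 < a -> veq m (Tmul m A a d) vzero -> veq m d vzero.
Proof. apply Tmul_inj. Qed.
End SA.

Lemma veq_sub (m : nat) u v : veq m (vsub u v) vzero -> veq m u v.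
Proof. intros H i Hi. specialize (H i Hi). unfold vsub, vzero in H. lra. Qed.
Lemma veq_sym (m : nat) u v : veq m u v -> veq m v u.
Proof. intros H i Hi. rewrite H; auto. Qed.
Lemma veq_trans (m : nat) u v w : veq m u v -> veq m v w -> veq m u w.
Proof. intros H1 H2 i Hi. rewrite H1, H2; auto. Qed.

Section SB.
Variable m : nat.
Variable A : mat.
Variable Hp : PinvHyp m.

Definition Bop a v := vscale a (Tinv m A a v).

Ltac Tsimp Ha Hi :=
  repeat rewrite ?Tmul_sub, ?Tmul_add, ?Tmul_scale;
  unfold vsub, vadd, vscale, vzero;
  repeat rewrite (Tinv_spec m A Hp _ _ Ha _ Hi).

Lemma Bop_contr a e : 0 < a -> norm m (Bop a e) <= norm m e.
Proof.
  intros Ha. set (p := Tinv m A a e).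
  assert (E : inner m (Tmul m A a p) p = inner m e p)
    by (apply inner_veq; [apply Tinv_spec; auto | intros i _; auto]).
  rewrite Tmul_eq, inner_add_l, inner_scale_l in E.
  pose proof (Sop_pos m A p). pose proof (inner_le m e p).
  pose proof (norm_sq m p). pose proof (norm_nonneg m p). pose proof (norm_nonneg m e).
  unfold Bop. fold p. rewrite norm_scale, Rabs_pos_eq by lra.
  destruct (Req_dec (norm m p) 0) as [Z|Z]. - rewrite Z; lra.
  - assert (a * norm m p * norm m p <= norm m e * norm m p) by nra.
    apply (Rmult_le_reg_r (norm m p)); lra.
Qed.

Lemma Bop_Sop a x : 0 < a -> norm m (Bop a (Sop m A x)) <= 2 * a * norm m x.
Proof.
  intros Ha.
  assert (H : veq m (Bop a (Sop m A x)) (vsub (vscale a x) (vscale a (Bop a x)))).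
  { apply veq_sub. apply (Tmul_inj m A a _ Ha). intros i Hi. unfold Bop.
    Tsimp Ha Hi. rewrite Tmul_eq. unfold vadd, vscale. ring. }
  rewrite (norm_veq m _ _ H). eapply Rle_trans; [apply norm_sub|].
  rewrite !norm_scale, Rabs_pos_eq by lra. pose proof (Bop_contr a x Ha). nra.
Qed.

Lemma Sop_Bop a v : 0 < a -> veq m (Sop m A (Bop a v)) (Bop a (Sop m A v)).
Proof.
  intros Ha. apply veq_sub. apply (Tmul_inj m A a _ Ha). intros i Hi.
  rewrite Tmul_sub. unfold vsub, vzero. rewrite <- Sop_Tmul. unfold Bop.
  rewrite Tmul_scale. rewrite (Sop_veq m A _ (vscale a v)).
  - rewrite Tmul_scale, Sop_scale. unfold vscale. rewrite (Tinv_spec m A Hp _ _ Ha _ Hi). ring.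
  - intros j Hj. unfold vscale. rewrite (Tinv_spec m A Hp _ _ Ha _ Hj). auto.
Qed.

Lemma tmv_veq G u v : veq m u v -> tmv m G u = tmv m G v.
Proof. intros H. rewrite !tmv_mv. apply mv_veq; auto. Qed.

Definition Rres a g := vsub (mv m A (Tinv m A a (tmv m A g))) g.

Lemma Tinv_add a u v : 0 < a -> veq m (Tinv m A a (vadd u v)) (vadd (Tinv m A a u) (Tinv m A a v)).
Proof. intros Ha. apply veq_sub. apply (Tmul_inj m A a _ Ha). intros i Hi. Tsimp Ha Hi. ring. Qed.

Lemma Tinv_veq a u v : 0 < a -> veq m u v -> veq m (Tinv m A a u) (Tinv m A a v).
Proof. intros Ha H. apply veq_sub. apply (Tmul_inj m A a _ Ha). intros i Hi. Tsimp Ha Hi. rewrite H; auto. ring. Qed.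

Lemma R_split a f g : 0 < a -> veq m (Rres a g) (vadd (Rres a f) (Rres a (vsub g f))).
Proof.
  intros Ha.
  assert (Hg : g = vadd f (vsub g f)) by (apply vext; intro i; unfold vadd, vsub; ring).
  assert (H1 : veq m (Tinv m A a (tmv m A g)) (vadd (Tinv m A a (tmv m A f)) (Tinv m A a (tmv m A (vsub g f))))).
  { eapply veq_trans; [|apply Tinv_add; auto]. apply Tinv_veq; auto.
    intros i Hi. rewrite Hg at 1. rewrite !tmv_mv, mv_add. auto. }
  unfold Rres. rewrite (mv_veq m A _ _ H1), mv_add. intros i Hi. unfold vadd, vsub. ring.
Qed.

Lemma R_bound a eta : 0 < a -> norm m (Rres a eta) <= norm m eta.
Proof.
  intros Ha. set (w := Tinv m A a (tmv m A eta)). set (r := Rres a eta).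
  assert (Hw : veq m (Tmul m A a w) (tmv m A eta)) by (apply Tinv_spec; auto).
  assert (Hr : veq m (tmv m A r) (vscale (-a) w)).
  { intros i Hi. unfold r, Rres. fold w. rewrite tmv_mv, mv_sub, <- !tmv_mv.
    specialize (Hw i Hi). rewrite Tmul_eq in Hw. unfold Sop, vadd, vsub, vscale in *. lra. }
  assert (E : inner m r r = - a * inner m w w - inner m r eta).
  { unfold r at 2. unfold Rres. fold w. rewrite inner_sub_r. fold r.
    rewrite <- adjoint. rewrite (inner_veq m _ _ w w Hr (fun _ _ => eq_refl)).
    rewrite inner_scale_l. ring. }
  pose proof (inner_pos m w). pose proof (cauchy_schwarz m r eta).
  pose proof (Rle_abs (- inner m r eta)). rewrite Rabs_Ropp in H1.
  pose proof (norm_sq m r). pose proof (norm_nonneg m r). pose proof (norm_nonneg m eta).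
  destruct (Req_dec (norm m r) 0) as [Z|Z]. - rewrite Z; lra.
  - assert (norm m r * norm m r <= norm m eta * norm m r) by nra.
    apply (Rmult_le_reg_r (norm m r)); lra.
Qed.

Lemma R_pos a f : 0 < a -> (exists i, (i < m)%nat /\ f i <> 0) -> 0 < norm m (Rres a f).
Proof.
  intros Ha [i0 [Hi0 Hf]]. destruct (Rle_lt_or_eq_dec 0 _ (norm_nonneg m (Rres a f))) as [P|P]; auto.
  exfalso. apply Hf. symmetry in P. apply norm_zero_veq in P.
  set (w := Tinv m A a (tmv m A f)).
  assert (Hw : veq m (Tmul m A a w) (tmv m A f)) by (apply Tinv_spec; auto).
  assert (Hr : veq m (tmv m A (Rres a f)) (vscale (-a) w)).
  { intros i Hi. unfold Rres. fold w. rewrite tmv_mv, mv_sub, <- !tmv_mv.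
    specialize (Hw i Hi). rewrite Tmul_eq in Hw. unfold Sop, vadd, vsub, vscale in *. lra. }
  rewrite (tmv_veq _ _ _ P) in Hr.
  assert (Hw0 : veq m w vzero).
  { intros i Hi. specialize (Hr i Hi). rewrite tmv_mv, mv_zero in Hr. unfold vzero, vscale in *.
    apply (Rmult_eq_reg_l (-a)); [lra| lra]. }
  specialize (P i0 Hi0). unfold Rres in P. fold w in P. rewrite (mv_veq m A _ _ Hw0), mv_zero in P.
  unfold vsub, vzero in P. lra.
Qed.

Lemma R_small a f y x LA : 0 < a -> veq m (mv m A y) f -> veq m (Sop m A x) y ->
  (forall v, norm m (mv m A v) <= LA * norm m v) -> 0 <= LA ->
  norm m (Rres a f) <= LA * (2 * a * norm m x).
Proof.
  intros Ha Hy Hx HLA HLA0.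
  assert (H : veq m (Rres a f) (mv m A (vscale (-1) (Bop a (Sop m A x))))).
  { assert (H1 : veq m (Tinv m A a (tmv m A f)) (vsub y (Bop a (Sop m A x)))).
    { apply veq_sub. apply (Tmul_inj m A a _ Ha). intros i Hi. unfold Bop. Tsimp Ha Hi.
      rewrite <- (tmv_veq _ _ _ Hy). fold (Sop m A y). rewrite Tmul_eq. unfold vadd, vscale.
      rewrite (Sop_veq m A _ _ (veq_sym m _ _ Hx)). rewrite Hx by auto. ring. }
    intros i Hi. unfold Rres. rewrite (mv_veq m A _ _ H1), mv_sub, mv_scale.
    unfold vsub, vscale. rewrite <- Hy by auto. ring. }
  rewrite (norm_veq m _ _ H). eapply Rle_trans; [apply HLA|].
  apply Rmult_le_compat_l; auto. rewrite norm_scale.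
  replace (Rabs (-1)) with 1 by (unfold Rabs; destruct Rcase_abs; lra). rewrite Rmult_1_l.
  apply Bop_Sop; auto.
Qed.

Lemma iter_step a f g y z u X Z : 0 < a ->
  veq m (mv m A y) f -> veq m (Sop m A z) (tmv m A (vsub g f)) ->
  veq m (vsub u (vadd y z)) (vsub Z (Sop m A X)) ->
  veq m (vsub (vadd (vscale a (Tinv m A a u)) (Tinv m A a (tmv m A g))) (vadd y z))
        (vsub (Bop a Z) (Sop m A (Bop a X))).
Proof.
  intros Ha Hy Hz Hu.
  assert (Hg : veq m (tmv m A g) (vadd (Sop m A y) (Sop m A z))).
  { intros i Hi. assert (g = vadd f (vsub g f)) as E by (apply vext; intro j; unfold vadd, vsub; ring).
    rewrite E at 1. rewrite !tmv_mv, mv_add, <- !tmv_mv. rewrite <- (tmv_veq _ _ _ Hy).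
    unfold vadd. rewrite <- Hz by auto. auto. }
  assert (HS : veq m (Tmul m A a (Sop m A (Bop a X))) (vscale a (Sop m A X))).
  { intros i Hi. rewrite <- Sop_Tmul. unfold Bop. rewrite Tmul_scale.
    rewrite (Sop_veq m A _ (vscale a X)). rewrite Sop_scale; auto.
    intros j Hj. unfold vscale. rewrite (Tinv_spec m A Hp _ _ Ha _ Hj). auto. }
  apply veq_sub. apply (Tmul_inj m A a _ Ha). intros i Hi.
  rewrite !Tmul_sub, !Tmul_add. unfold vsub, vadd, vzero.
  rewrite HS by auto. unfold Bop. rewrite !Tmul_scale. unfold vscale.
  rewrite !(Tinv_spec m A Hp _ _ Ha _ Hi). rewrite Hg by auto.
  specialize (Hu i Hi). rewrite !Tmul_eq. unfold vadd, vsub, vscale in *. replace (u i) with (Z i - Sop m A X i + (y i + z i)) by lra. ring.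
Qed.

Lemma iter_inv q f g y z x : 0 < q ->
  veq m (mv m A y) f -> veq m (Sop m A z) (tmv m A (vsub g f)) -> veq m (Sop m A x) y ->
  forall k, exists X Z, norm m X <= norm m x /\ norm m Z <= norm m z /\
    veq m (vsub (uu m A q g k) (vadd y z)) (vsub Z (Sop m A X)).
Proof.
  intros Hq Hy Hz Hx k. induction k as [|k IH].
  - exists x, (vscale (-1) z). split; [lra|]. split.
    + rewrite norm_scale. replace (Rabs (-1)) with 1 by (unfold Rabs; destruct Rcase_abs; lra). lra.
    + intros i Hi. simpl. unfold vsub, vadd, vscale, vzero. rewrite Hx by auto. ring.
  - destruct IH as [X [Z [HX [HZ HI]]]].
    assert (Ha : 0 < q ^ S k) by (apply pow_lt; auto).
    exists (Bop (q ^ S k) X), (Bop (q ^ S k) Z). split; [|split].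
    + eapply Rle_trans; [apply Bop_contr; auto| auto].
    + eapply Rle_trans; [apply Bop_contr; auto| auto].
    + change (uu m A q g (S k)) with
        (vadd (vscale (q ^ S k) (Tinv m A (q ^ S k) (uu m A q g k))) (Tinv m A (q ^ S k) (tmv m A g))).
      apply (iter_step _ f); auto.
Qed.

Lemma iter_bound q f g y z x : 0 < q ->
  veq m (mv m A y) f -> veq m (Sop m A z) (tmv m A (vsub g f)) -> veq m (Sop m A x) y ->
  forall k, norm m (vsub (uu m A q g (S k)) y) <= 2 * q ^ S k * norm m x + 2 * norm m z.
Proof.
  intros Hq Hy Hz Hx k.
  destruct (iter_inv q f g y z x Hq Hy Hz Hx k) as [X [Z [HX [HZ HI]]]].
  assert (Ha : 0 < q ^ S k) by (apply pow_lt; auto).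
  pose proof (iter_step (q ^ S k) f g y z _ X Z Ha Hy Hz HI) as H.
  change (vadd (vscale (q ^ S k) (Tinv m A (q ^ S k) (uu m A q g k))) (Tinv m A (q ^ S k) (tmv m A g)))
    with (uu m A q g (S k)) in H.
  pose proof (Sop_Bop (q ^ S k) X Ha) as H2.
  assert (E : veq m (vsub (uu m A q g (S k)) y)
                (vadd (vsub (Bop (q ^ S k) Z) (Bop (q ^ S k) (Sop m A X))) z)).
  { intros i Hi. specialize (H i Hi). specialize (H2 i Hi). unfold vsub, vadd in *. lra. }
  rewrite (norm_veq m _ _ E).
  eapply Rle_trans; [apply norm_triangle|].
  pose proof (norm_sub m (Bop (q ^ S k) Z) (Bop (q ^ S k) (Sop m A X))).
  pose proof (Bop_contr _ Z Ha). pose proof (Bop_Sop _ X Ha).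
  assert (0 <= q ^ S k) by lra. nra.
Qed.
End SB.

Lemma y_perp m A f y : min_norm_solution m A f y ->
  forall k, veq m (mv m A k) vzero -> inner m y k = 0.
Proof.
  intros [Hy Hmin] k Hk.
  set (c := inner m y k). set (K := inner m k k).
  assert (HK : 0 <= K) by apply inner_pos.
  set (t := - c / (K + 1)).
  set (z := vadd y (vscale t k)).
  assert (Hz : veq m (mv m A z) f).
  { intros i Hi. unfold z. rewrite mv_add, mv_scale. unfold vadd, vscale. rewrite Hk, Hy by auto.
    unfold vzero. ring. }
  pose proof (Hmin z Hz) as Hn.
  pose proof (norm_nonneg m y). pose proof (norm_nonneg m z).
  assert (Hi : inner m y y <= inner m z z) by (rewrite <- !norm_sq; nra).
  unfold z in Hi. rewrite inner_add_l, !inner_add_r, !inner_scale_l, !inner_scale_r in Hi.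
  rewrite (inner_sym m k y) in Hi. fold c in Hi. fold K in Hi.
  assert (E : t * c + t * c + t * (t * K) = - (c * c) * (K + 2) / ((K + 1) * (K + 1))).
  { unfold t. field. lra. }
  assert (0 <= - (c * c) * (K + 2) / ((K + 1) * (K + 1))) by lra.
  assert (0 < (K + 1) * (K + 1)) by nra.
  assert (0 <= - (c * c) * (K + 2)).
  { replace (- (c * c) * (K + 2)) with ((- (c * c) * (K + 2) / ((K + 1) * (K + 1))) * ((K + 1) * (K + 1))) by (field; lra).
    apply Rmult_le_pos; lra. }
  nra.
Qed.

Lemma Rpower_gt_self d eps : 0 < d < 1 -> 0 < eps < 1 -> d < Rpower d eps.
Proof.
  intros Hd He. unfold Rpower.
  assert (ln d < 0) by (rewrite <- ln_1; apply ln_increasing; lra).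
  rewrite <- (exp_ln d) at 1 by lra. apply exp_increasing. nra.
Qed.

Lemma small_delta C eps rho : 1 < C -> 0 < eps < 1 -> 0 < rho ->
  exists d0, 0 < d0 /\ forall d, 0 < d < d0 -> d < 1 -> d + C * Rpower d eps < rho.
Proof.
  intros HC He Hr. set (t := rho / (1 + C)). assert (Ht : 0 < t) by (unfold t; apply Rdiv_lt_0_compat; lra).
  exists (Rpower t (/ eps)). split. { unfold Rpower; apply exp_pos. }
  intros d Hd Hd1.
  assert (H1 : Rpower d eps < t).
  { replace t with (Rpower (Rpower t (/ eps)) eps).
    - apply Rlt_Rpower_l; lra.
    - rewrite Rpower_mult, Rinv_l by lra. apply Rpower_1; auto. }
  pose proof (Rpower_gt_self d eps ltac:(lra) He).
  assert (t * (1 + C) = rho) by (unfold t; field; lra). nra.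
Qed.

Lemma min_pos (h : nat -> R) : (forall n, (1 <= n)%nat -> 0 < h n) ->
  forall N, exists rho, 0 < rho /\ forall n, (1 <= n)%nat -> (n <= N)%nat -> rho <= h n.
Proof.
  intros Hh N. induction N as [|N [r [Hr H]]].
  - exists 1. split; [lra|]. intros; lia.
  - exists (Rmin r (h (S N))). split. { apply Rmin_pos; auto. apply Hh; lia. }
    intros n H1 H2. destruct (Nat.eq_dec n (S N)).
    + subst. apply Rmin_r.
    + eapply Rle_trans; [apply Rmin_l| apply H; lia].
Qed.

Lemma exists_min (P : nat -> Prop) : (exists n, P n) -> exists n, P n /\ forall k, (k < n)%nat -> ~ P k.
Proof.
  intros [n Hn]. apply NNPP. intros Hno.
  assert (forall n k, (k <= n)%nat -> ~ P k).
  { induction n0; intros k Hk.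
    - intros Pk. apply Hno. exists k. split; auto. intros; lia.
    - intros Pk. apply Hno. exists k. split; auto. intros j Hj. apply IHn0. lia. }
  apply (H n n); auto.
Qed.

Lemma norm_add_rev m a b : norm m a - norm m b <= norm m (vadd a b).
Proof.
  pose proof (norm_sub m (vadd a b) b).
  replace (vsub (vadd a b) b) with a in H by (apply vext; intro i; unfold vsub, vadd; ring). lra.
Qed.

Lemma lt_div_mul a b r : 0 < r -> a < b / r -> a * r < b.
Proof. intros Hr H. apply (Rmult_lt_compat_r r) in H; auto. replace (b / r * r) with b in H by (field; lra). auto. Qed.

Theorem main_aux (Hp : forall m, PinvHyp m) (m : nat) (A : mat) (f y : vec) (q C eps : R)
  (fd : R -> vec)
  (Hrange : exists x, veq m (mv m A x) f)
  (Hy : min_norm_solution m A f y)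
  (Hq : 0 < q < 1) (HC : 1 < C) (Heps : 0 < eps < 1)
  (Hfd_close : forall delta, 0 < delta < 1 -> norm m (vsub (fd delta) f) <= delta)
  (Hfd_large : forall delta, 0 < delta < 1 -> norm m (fd delta) > C * Rpower delta eps) :
  forall e, 0 < e -> exists d, 0 < d /\
    forall delta, 0 < delta < d ->
      norm m (vsub (useq m A q (fd delta) (n_delta m A q C eps delta (fd delta))) y) < e.
Proof.
  intros e He.
  pose proof (y_perp m A f y Hy) as Hperp.
  destruct Hy as [HyA Hmin].
  pose proof (Hp m) as Hpm.
  destruct (Hp m (Smat m A)) as [PS HPS].
  assert (HSker : forall v, veq m (mv m (Smat m A) v) vzero -> veq m (mv m A v) vzero).
  { intros v Hv. apply Sop_ker. rewrite Sop_mat. auto. }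
  assert (HtS : forall w, tmv m (Smat m A) w = Sop m A w).
  { intros w. rewrite tmv_mv, Smat_sym, Sop_mat. auto. }
  set (x := tmv m PS y).
  assert (Hx : veq m (Sop m A x) y).
  { unfold x. rewrite <- HtS. apply HPS. intros v Hv. apply Hperp. apply HSker; auto. }
  assert (Hz : forall w, veq m (Sop m A (tmv m PS (tmv m A w))) (tmv m A w)).
  { intros w. rewrite <- HtS. apply HPS. intros v Hv. rewrite adjoint.
    rewrite (inner_veq m w w _ vzero (fun _ _ => eq_refl) (HSker v Hv)). rewrite inner_sym. apply inner_vzero_l. }
  destruct (op_bound m A) as [LA [HLA0 HLA]].
  destruct (op_bound m (trm PS)) as [L1 [HL10 HL1]].
  destruct (op_bound m (trm A)) as [L2 [HL20 HL2]].
  set (K := L1 * L2). assert (HK0 : 0 <= K) by (unfold K; apply Rmult_le_pos; auto).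
  assert (HzB : forall w, norm m (tmv m PS (tmv m A w)) <= K * norm m w).
  { intros w. rewrite (tmv_mv m PS). eapply Rle_trans; [apply HL1|]. unfold K.
    rewrite Rmult_assoc. apply Rmult_le_compat_l; auto. apply HL2. }
  set (nx := norm m x). assert (Hnx : 0 <= nx) by apply norm_nonneg.
  assert (Hqn : forall n, 0 < q ^ n) by (intros; apply pow_lt; lra).
  assert (Hnd : forall delta, 0 < delta < 1 ->
     (1 <= n_delta m A q C eps delta (fd delta))%nat /\
     norm m (Rres m A (q ^ n_delta m A q C eps delta (fd delta)) (fd delta)) <= C * Rpower delta eps).
  { intros delta Hd.
    set (g := fd delta).
    assert (Hgap : delta < C * Rpower delta eps).
    { pose proof (Rpower_gt_self delta eps Hd Heps). nra. }
    set (gap := C * Rpower delta eps - delta).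
    destruct (pow_lt_1_zero q ltac:(rewrite Rabs_pos_eq; lra) (gap / (2 * LA * nx + 1)))
      as [N HN].
    { apply Rdiv_lt_0_compat; [unfold gap; lra| nra]. }
    assert (Hex : exists n, (1 <= n)%nat /\ stop_cond m A q C eps delta g n).
    { exists (Nat.max N 1). split; [lia|]. unfold stop_cond. fold (Rres m A (q ^ Nat.max N 1) g).
      set (n := Nat.max N 1).
      pose proof (HN n ltac:(unfold n; lia)) as HN1. rewrite Rabs_pos_eq in HN1 by (left; auto).
      pose proof (R_split m A Hpm (q ^ n) f g (Hqn n)) as Hs.
      rewrite (norm_veq m _ _ Hs). eapply Rle_trans; [apply norm_triangle|].
      pose proof (R_small m A Hpm (q ^ n) f y x LA (Hqn n) HyA Hx HLA HLA0).
      pose proof (R_bound m A Hpm (q ^ n) (vsub g f) (Hqn n)).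
      pose proof (Hfd_close delta Hd). fold g in H1.
      assert (LA * (2 * q ^ n * nx) <= gap).
      { assert (0 < 2 * LA * nx + 1) by nra.
        apply lt_div_mul in HN1; auto.
        pose proof (Hqn n). nra. }
      unfold nx in *. unfold gap in *. lra. }
    destruct (exists_min _ Hex) as [n0 [[Hn01 Hn0s] Hn0m]].
    assert (Hspec : (1 <= n_delta m A q C eps delta g)%nat /\ stop_cond m A q C eps delta g (n_delta m A q C eps delta g) /\
       forall k, (1 <= k)%nat -> (k < n_delta m A q C eps delta g)%nat -> ~ stop_cond m A q C eps delta g k).
    { unfold n_delta. apply epsilon_spec. exists n0. split; auto. split; auto.
      intros k Hk1 Hk2 Hs. apply (Hn0m k Hk2). split; auto. }
    destruct Hspec as [H1 [H2 _]]. split; auto. }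
  assert (Hub : forall delta k, 0 < delta < 1 ->
     norm m (vsub (uu m A q (fd delta) (S k)) y) <= 2 * q ^ S k * nx + 2 * (K * delta)).
  { intros delta k Hd.
    pose proof (iter_bound m A Hpm q f (fd delta) y (tmv m PS (tmv m A (vsub (fd delta) f))) x
                  ltac:(lra) HyA (Hz _) Hx k).
    pose proof (HzB (vsub (fd delta) f)). pose proof (Hfd_close delta Hd). unfold nx. nra. }
  destruct (classic (exists i, (i < m)%nat /\ f i <> 0)) as [Hf | Hf].
  -
    destruct (pow_lt_1_zero q ltac:(rewrite Rabs_pos_eq; lra) (e / (4 * (nx + 1))))
      as [N HN]. { apply Rdiv_lt_0_compat; lra. }
    set (N' := Nat.max N 1).
    destruct (min_pos (fun n => norm m (Rres m A (q ^ n) f))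
                (fun n _ => R_pos m A Hpm (q ^ n) f (Hqn n) Hf) N') as [rho [Hrho Hrho']].
    destruct (small_delta C eps rho HC Heps Hrho) as [d0 [Hd0 Hd0']].
    exists (Rmin (Rmin 1 d0) (e / (4 * K + 1))). split.
    { apply Rmin_pos; [apply Rmin_pos; lra|]. apply Rdiv_lt_0_compat; lra. }
    intros delta Hd.
    assert (Hd1 : delta < 1) by (pose proof (Rmin_l (Rmin 1 d0) (e / (4 * K + 1))); pose proof (Rmin_l 1 d0); lra).
    assert (Hd2 : delta < d0) by (pose proof (Rmin_l (Rmin 1 d0) (e / (4 * K + 1))); pose proof (Rmin_r 1 d0); lra).
    assert (Hd3 : delta < e / (4 * K + 1)) by (pose proof (Rmin_r (Rmin 1 d0) (e / (4 * K + 1))); lra).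
    destruct (Hnd delta ltac:(lra)) as [Hn1 Hns].
    set (nd := n_delta m A q C eps delta (fd delta)) in *.
    assert (HnN : (N' < nd)%nat).
    { destruct (Nat.lt_ge_cases N' nd) as [|Hle]; auto. exfalso.
      pose proof (Hrho' nd Hn1 Hle).
      pose proof (R_split m A Hpm (q ^ nd) f (fd delta) (Hqn nd)) as Hs.
      rewrite (norm_veq m _ _ Hs) in Hns.
      pose proof (norm_add_rev m (Rres m A (q ^ nd) f) (Rres m A (q ^ nd) (vsub (fd delta) f))).
      pose proof (R_bound m A Hpm (q ^ nd) (vsub (fd delta) f) (Hqn nd)).
      pose proof (Hfd_close delta ltac:(lra)).
      pose proof (Hd0' delta ltac:(lra) Hd1). lra. }
    unfold useq. destruct nd as [|[|k]]; [lia|lia|].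
    replace (S (S k) - 1)%nat with (S k) by lia.
    pose proof (Hub delta k ltac:(lra)).
    pose proof (HN (S k) ltac:(unfold N' in HnN; lia)) as HN1.
    rewrite Rabs_pos_eq in HN1 by (left; auto).
    assert (2 * q ^ S k * nx < e / 2).
    { assert (q ^ S k * (4 * (nx + 1)) < e).
      { apply lt_div_mul in HN1; lra. }
      pose proof (Hqn (S k)). nra. }
    assert (2 * (K * delta) < e / 2).
    { assert (delta * (4 * K + 1) < e).
      { apply lt_div_mul in Hd3; lra. }
      nra. }
    lra.
  -
    assert (Hf0 : veq m f vzero).
    { intros i Hi. unfold vzero. apply NNPP. intros Hne. apply Hf. exists i. auto. }
    assert (Hy0 : norm m y = 0).
    { pose proof (Hmin vzero). rewrite mv_zero in H. pose proof (norm_nonneg m y).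
      rewrite norm_vzero in H. assert (norm m y <= 0) by (apply H; apply veq_sym; auto). lra. }
    assert (Hx0 : nx = 0).
    { unfold nx, x. apply norm_veq0. rewrite (tmv_veq m PS _ _ (norm_zero_veq m y Hy0)).
      rewrite tmv_mv, mv_zero. intros i _; auto. }
    exists (Rmin 1 (e / (4 * K + 1))). split.
    { apply Rmin_pos; [lra|]. apply Rdiv_lt_0_compat; lra. }
    intros delta Hd.
    assert (Hd1 : delta < 1) by (pose proof (Rmin_l 1 (e / (4 * K + 1))); lra).
    assert (Hd3 : delta < e / (4 * K + 1)) by (pose proof (Rmin_r 1 (e / (4 * K + 1))); lra).
    assert (2 * (K * delta) < e / 2).
    { assert (delta * (4 * K + 1) < e).
      { apply lt_div_mul in Hd3; lra. }
      nra. }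
    unfold useq. destruct (n_delta m A q C eps delta (fd delta) - 1)%nat as [|k].
    + simpl. rewrite norm_veq0. lra. intros i Hi. pose proof (norm_zero_veq m y Hy0 i Hi).
      unfold vsub, vzero in *. lra.
    + pose proof (Hub delta k ltac:(lra)). rewrite Hx0 in H0. nra.
Qed.

From HB Require Import structures.
From mathcomp Require Import all_boot all_order all_algebra.
From Stdlib Require Import Reals ClassicalEpsilon FunctionalExtensionality.
Set Implicit Arguments. Unset Strict Implicit. Unset Printing Implicit Defensive.

Definition RR : Type := R.
Definition Req_bool (x y : RR) : bool := if Req_EM_T x y then true else false.
Lemma Req_boolP : Equality.axiom Req_bool.
Proof. move=> x y; rewrite /Req_bool; case: Req_EM_T => H; constructor => //. Qed.
HB.instance Definition _ := hasDecEq.Build RR Req_boolP.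

Definition Rfind (P : pred RR) (n : nat) : option RR :=
  match excluded_middle_informative (exists x, P x) with
  | left H => Some (proj1_sig (constructive_indefinite_description _ H))
  | right _ => None end.
Lemma Rfind_correct P n x : Rfind P n = Some x -> P x.
Proof. rewrite /Rfind; case: excluded_middle_informative => // H [<-].
by case: constructive_indefinite_description. Qed.
Lemma Rfind_complete (P : pred RR) : (exists x, P x) -> exists n, Rfind P n.
Proof. move=> H; exists O; rewrite /Rfind; case: excluded_middle_informative => //. Qed.
Lemma Rfind_ext (P Q : pred RR) : P =1 Q -> Rfind P =1 Rfind Q.
Proof. move=> H; have -> : P = Q by apply: functional_extensionality. by []. Qed.
HB.instance Definition _ := hasChoice.Build RR Rfind_correct Rfind_complete Rfind_ext.

Lemma RRaddA : associative (Rplus : RR -> RR -> RR). Proof. move=> x y z; rewrite Rplus_assoc //. Qed.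
Lemma RRaddC : commutative (Rplus : RR -> RR -> RR). Proof. move=> x y; exact: Rplus_comm. Qed.
Lemma RRadd0 : left_id (0%R : RR) Rplus. Proof. move=> x; exact: Rplus_0_l. Qed.
Lemma RRaddN : left_inverse (0%R : RR) Ropp Rplus. Proof. move=> x; exact: Rplus_opp_l. Qed.
HB.instance Definition _ := GRing.isZmodule.Build RR RRaddA RRaddC RRadd0 RRaddN.
Lemma RRmulA : associative (Rmult : RR -> RR -> RR). Proof. move=> x y z; rewrite Rmult_assoc //. Qed.
Lemma RRmulC : commutative (Rmult : RR -> RR -> RR). Proof. move=> x y; exact: Rmult_comm. Qed.
Lemma RRmul1 : left_id (1%R : RR) Rmult. Proof. move=> x; exact: Rmult_1_l. Qed.
Lemma RRmulD : left_distributive (Rmult : RR -> RR -> RR) Rplus. Proof. move=> x y z; exact: Rmult_plus_distr_r. Qed.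
Lemma RR10 : (1%R : RR) != 0%R. Proof. apply/eqP; exact: R1_neq_R0. Qed.
HB.instance Definition _ := GRing.Zmodule_isComNzRing.Build RR RRmulA RRmulC RRmul1 RRmulD RR10.
Lemma RRmulV (x : RR) : x != 0%R -> (Rinv x : RR) * x = 1%R.
Proof. move/eqP=> H; exact: Rinv_l. Qed.
Lemma RRinv0 : (Rinv 0%R : RR) = 0%R. Proof. exact: Rinv_0. Qed.
HB.instance Definition _ := GRing.ComNzRing_isField.Build RR RRmulV RRinv0.

Import GRing.Theory.
Section MCS.
Local Open Scope ring_scope.

Lemma rsum_big m (g : nat -> R) : rsum m g = (\sum_(i < m) (g i : RR)).
Proof.
elim: m => [|m IH] /=; first by rewrite big_ord0.
by rewrite big_ord_recr /= IH.
Qed.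

Definition ofO m (M : 'M[RR]_m) : mat := fun i j =>
  match @insub nat (fun k => ltn k m) _ i, @insub nat (fun k => ltn k m) _ j with
  | Some i', Some j' => M i' j' | _, _ => R0 end.

Lemma ofO_val m (M : 'M[RR]_m) (i j : 'I_m) : ofO M i j = M i j.
Proof. by rewrite /ofO !valK. Qed.

Lemma pinv_exists (m : nat) (G : mat) : exists P : mat, forall y : vec,
  (forall v, veq m (mv m G v) vzero -> inner m y v = R0) ->
  veq m (tmv m G (tmv m P y)) y.
Proof.
pose M : 'M[RR]_m := \matrix_(i, j) (G i j : RR).
exists (ofO (pinvmx M)) => y H.
pose Y : 'rV[RR]_m := \row_j (y j : RR).
have HY : Y *m cokermx M = 0.
  apply/matrixP => i j; rewrite !mxE.
  pose C := cokermx M.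
  have hv := H (fun k => match @insub nat (fun k => ltn k m) _ k with
                  Some k' => C k' j | None => R0 end).
  rewrite /inner rsum_big in hv.
  rewrite -[RHS]hv.
    by apply: eq_bigr => k _; rewrite valK !mxE.
  move=> i0 /ltP hi0; rewrite /mv rsum_big /vzero.
  transitivity ((M *m cokermx M) (Ordinal hi0) j); last by rewrite mulmx_coker mxE.
  rewrite mxE; apply: eq_bigr => k _; by rewrite valK !mxE.
have hsub : (Y <= M)%MS by rewrite submxE HY.
have hX := mulmxKpV hsub.
move=> j /ltP hj.
transitivity ((Y *m pinvmx M *m M) ord0 (Ordinal hj)); last by rewrite hX mxE.
rewrite mxE.
rewrite /tmv rsum_big; apply: eq_bigr => i _.
rewrite !mxE rsum_big [RHS]mulrC; apply: (f_equal2 Rmult) => //.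

apply: eq_bigr => k _.
rewrite ofO_val.
have -> : Y ord0 k = y k by rewrite mxE.
exact (Rmult_comm _ _).
Qed.
End MCS.

Open Scope R_scope.

Theorem theorem3p6 (m : nat) (A : mat) (f y : vec) (q C eps : R)
  (fd : R -> vec)
  (Hrange : exists x, veq m (mv m A x) f)
  (Hy : min_norm_solution m A f y)
  (Hq : 0 < q < 1) (HC : 1 < C) (Heps : 0 < eps < 1)
  (Hfd_close : forall delta, 0 < delta < 1 -> norm m (vsub (fd delta) f) <= delta)
  (Hfd_large : forall delta, 0 < delta < 1 -> norm m (fd delta) > C * Rpower delta eps) :
  forall e, 0 < e -> exists d, 0 < d /\
    forall delta, 0 < delta < d ->
      norm m (vsub (useq m A q (fd delta) (n_delta m A q C eps delta (fd delta))) y) < e.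
Proof.
  exact (main_aux pinv_exists m A f y q C eps fd Hrange Hy Hq HC Heps Hfd_close Hfd_large).
Qed.
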